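(* Let $(G,\sigma)$ be a connection graph with vertex set $V$, and let $H\subsetneq V$ be a nonempty proper subset. Suppose $f:V\to\mathbb{R}^{d\times d}$ is harmonic on $H$, i.e. $(\mathcal{L}f)(i)=\sum_{j\sim i}w_{ij}(f(i)-\sigma_{ij}f(j))=0_{d\times d}$ for every $i\in H$. Let $\|\cdot\|$ be any orthogonally invariant matrix norm on $\mathbb{R}^{d\times d}$. Then $$\max_{i\in\overline{H}}\|f(i)\|=\max_{i\in\partial H}\|f(i)\|.$$
   Context: A connection graph $(G,\sigma)$ consists of a finite connected weighted graph $G=(V,E,W)$ (weights $w_{ij}>0$ iff $\{i,j\}\in E$, no loops or multiple edges) and a map $\sigma$ from oriented edges to $\mathsf{O}(d)$ with $\sigma_{ji}=\sigma_{ij}^{\mathrm T}$. The vertex boundary is $\partial H=\{j\in V\setminus H:\ j\sim i\text{ for some }i\in H\}$ and $\overline{H}=H\cup\partial H$. *)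

(* Defs.v *)
From mathcomp Require Import all_boot all_order all_algebra.
Set Implicit Arguments. Unset Strict Implicit. Unset Printing Implicit Defensive.
Import Order.TTheory GRing.Theory Num.Theory.
Local Open Scope ring_scope.

Definition orthogonal_mx (R : realFieldType) (d : nat) (U : 'M[R]_d) : Prop :=
  U *m U^T = 1%:M.

Definition adj (R : realFieldType) (V : finType) (w : V -> V -> R) : rel V :=
  fun i j => 0 < w i j.

Definition connection_graph (R : realFieldType) (V : finType) (d : nat)
    (w : V -> V -> R) (sigma : V -> V -> 'M[R]_d) : Prop :=
  (forall i j, w i j = w j i) /\
  (forall i j, 0 <= w i j) /\
  (forall i, w i i = 0) /\
  (forall i j, connect (adj w) i j) /\
  (forall i j, adj w i j -> orthogonal_mx (sigma i j)) /\
  (forall i j, adj w i j -> sigma j i = (sigma i j)^T).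

Definition vboundary (R : realFieldType) (V : finType) (w : V -> V -> R)
    (H : {set V}) : {set V} :=
  [set j | (j \notin H) && [exists i, (i \in H) && adj w j i]].

Definition vclosure (R : realFieldType) (V : finType) (w : V -> V -> R)
    (H : {set V}) : {set V} := H :|: vboundary w H.

Definition conn_laplacian (R : realFieldType) (V : finType) (d : nat)
    (w : V -> V -> R) (sigma : V -> V -> 'M[R]_d) (f : V -> 'M[R]_d) (i : V)
    : 'M[R]_d :=
  \sum_(j | adj w i j) w i j *: (f i - sigma i j *m f j).

Definition matrix_norm (R : realFieldType) (d : nat) (N : 'M[R]_d -> R) : Prop :=
  [/\ (forall A, 0 <= N A),
      (forall A, N A = 0 -> A = 0),
      (forall (c : R) A, N (c *: A) = `|c| * N A) &
      (forall A B, N (A + B) <= N A + N B)].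

Definition orth_invariant (R : realFieldType) (d : nat) (N : 'M[R]_d -> R) : Prop :=
  forall U W A, orthogonal_mx U -> orthogonal_mx W -> N (U *m A *m W) = N A.

(* Maximum of a nonnegative function over a finite set (0 if empty). *)
Definition setmax (R : realFieldType) (V : finType) (S : {set V}) (F : V -> R) : R :=
  \big[Num.max/0]_(i in S) F i.

(* Main.v *)
Require Import Defs.
From mathcomp Require Import all_boot all_order all_algebra.
Import Order.TTheory GRing.Theory Num.Theory.
Local Open Scope ring_scope.

Lemma norm_sum_le (R : realFieldType) (d : nat) (N : 'M[R]_d -> R) (I : finType)
  (P : pred I) (F : I -> 'M[R]_d) : matrix_norm N ->
  N (\sum_(i | P i) F i) <= \sum_(i | P i) N (F i).
Proof.
case=> N0 _ NZ ND.
elim/big_ind2: _ => //.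
- by have := NZ 0 0; rewrite scale0r normr0 mul0r => ->.
- by move=> a1 a2 b1 b2 h1 h2; apply: le_trans (ND _ _) _; exact: lerD.
Qed.

Theorem proposition4p1 (R : realFieldType) (V : finType) (d : nat)
    (w : V -> V -> R) (sigma : V -> V -> 'M[R]_d)
    (H : {set V}) (f : V -> 'M[R]_d) (N : 'M[R]_d -> R) :
  connection_graph w sigma ->
  H != set0 -> H != [set: V] ->
  (forall i, i \in H -> conn_laplacian w sigma f i = 0) ->
  matrix_norm N -> orth_invariant N ->
  setmax (vclosure w H) (fun i => N (f i)) = setmax (vboundary w H) (fun i => N (f i)).
Proof.
move=> [wsym [wge0 [w0 [conn [orth sigT]]]]] Hne HnT harm Nn Ninv.
have Nn' := Nn; case: Nn' => N0 _ NZ _.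
set mb := setmax (vboundary w H) (fun i => N (f i)).
have mb0 : 0 <= mb by exact: bigmax_ge_id.
have bd i : i \in vboundary w H -> N (f i) <= mb by move=> hi; exact: le_bigmax_cond.
have adjS x y : adj w x y -> adj w y x by rewrite /adj wsym.
have Nsig x j : adj w x j -> N (sigma x j *m f j) = N (f j).
  move=> h; have := Ninv (sigma x j) 1%:M (f j) (orth _ _ h).
  rewrite mulmx1 => ->//; by rewrite /orthogonal_mx trmx1 mulmx1.
have prop (M : R) x y : x \in H -> N (f x) = M ->
    (forall j, j \in vclosure w H -> N (f j) <= M) -> adj w x y -> N (f y) = M.
  move=> xH NxM Mle axy.
  have lej j : adj w x j -> N (f j) <= M.
    move=> axj; apply: Mle; rewrite /vclosure inE.
    case: (boolP (j \in H)) => //= jH; rewrite /vboundary inE jH /=.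
    by apply/existsP; exists x; rewrite xH adjS.
  have := harm x xH; rewrite /conn_laplacian.
  under eq_bigr do rewrite scalerBr.
  rewrite sumrB -scaler_suml => /eqP; rewrite subr_eq0 => /eqP E.
  set S := \sum_(j | adj w x j) w x j.
  have S0 : 0 <= S by apply: sumr_ge0 => j _; exact: wge0.
  have key : S * M <= \sum_(j | adj w x j) w x j * N (f j).
    have := congr1 N E; rewrite NZ ger0_norm // NxM => ->.
    apply: le_trans (@norm_sum_le _ _ _ _ _ _ Nn) _.
    by apply: ler_sum => j aj; rewrite NZ ger0_norm ?wge0 // Nsig.
  have hnn : forall j, adj w x j -> 0 <= w x j * (M - N (f j)).
    by move=> j aj; rewrite mulr_ge0 ?wge0 // subr_ge0 lej.
  have : \sum_(j | adj w x j) w x j * (M - N (f j)) = 0.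
    apply/eqP; rewrite eq_le; apply/andP; split; last exact: sumr_ge0.
    under eq_bigr do rewrite mulrBr.
    by rewrite sumrB -mulr_suml subr_le0.
  move/psumr_eq0P => /(_ hnn y axy)/eqP.
  rewrite mulf_eq0 => /orP[].
  - by rewrite gt_eqF.
  - by rewrite subr_eq0 => /eqP ->.
have K : forall i, i \in H -> N (f i) <= mb.
  set M := setmax H (fun i => N (f i)).
  suff hM : M <= mb by move=> i iH; apply: le_trans hM; exact: le_bigmax_cond.
  rewrite leNgt; apply/negP => Mgt.
  have [j0 j0H] : exists j0, j0 \in H by apply/set0Pn.
  have [i0 i0H Mi0] := @eq_bigmax _ _ V 0 j0 (fun i => i \in H) (fun i => N (f i)) j0H (fun i _ => N0 (f i)).
  have Mle : forall j, j \in vclosure w H -> N (f j) <= M.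
    move=> j; rewrite /vclosure inE => /orP[jH|jb]; first exact: le_bigmax_cond.
    exact: le_trans (bd _ jb) (ltW Mgt).
  have [v vH] : exists v, v \notin H.
    apply/existsP; move: HnT; apply: contraNT; rewrite negb_exists => /forallP hv.
    by apply/eqP/setP => u; rewrite inE; move: (hv u); rewrite negbK.
  have bdM x y : x \in H -> adj w x y -> y \notin H -> N (f y) = M -> False.
    move=> xH axy yH NyM.
    have yb : y \in vboundary w H.
      by rewrite /vboundary inE yH /=; apply/existsP; exists x; rewrite xH adjS.
    by have := bd y yb; rewrite NyM leNgt Mgt.
  case/connectP: (conn i0 v) => p pth vE.
  have : forall x, x \in H -> N (f x) = M -> path (adj w) x p -> last x p \in H.
    elim: p {pth vE} => [|y p IH] x xH NxM //=.
    case/andP => axy pth.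
    have NyM := prop M x y xH NxM Mle axy.
    case: (boolP (y \in H)) => yH; first exact: IH.
    exfalso; exact: (bdM x y xH axy yH NyM).
  move/(_ i0 i0H (esym Mi0) pth); rewrite -vE => vH'.
  by rewrite vH' in vH.
apply/le_anti/andP; split.
  apply: bigmax_le => // i; rewrite /vclosure inE => /orP[iH|ib]; [exact: K|exact: bd].
apply: bigmax_le; first exact: bigmax_ge_id.
move=> i ib; apply: le_bigmax_cond; by rewrite /vclosure inE ib orbT.
Qed.
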